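(* Let $(X,d)$ be a complete metric space and let $T:X\to X$ satisfy, for all $x,y\in X$ with $Tx\neq Ty$, $F(d(Tx,Ty))\le E(d(x,y))$, where $F,E:(0,\infty)\to\mathbb{R}$ satisfy: $(p_1)$ $F$ is nondecreasing; $(p_2)$ $E(t)<F(t)$ for every $t>0$; $(p_3)$ for every $\varepsilon>0$ and every sequence $(t_n)\subset(\varepsilon,\infty)$ with $t_n\to\varepsilon$, $\liminf_{n\to\infty}E(t_n)<F(\varepsilon^+)$, where $F(\varepsilon^+)=\lim_{s\to\varepsilon^+}F(s)$. Then $T$ is a CJMP-contraction, and hence a Picard operator.
   Context: $T$ is contractive if $d(Tx,Ty)<d(x,y)$ for all $x\neq y$. $T$ is a CJMP-contraction if it is contractive and for every $\varepsilon>0$ there exists $\delta>0$ such that for all $x,y\in X$, $\varepsilon<d(x,y)<\varepsilon+\delta$ implies $d(Tx,Ty)\le\varepsilon$. $T$ is a Picard operator if $T$ has a unique fixed point $u\in X$ and for every $x\in X$ the sequence $(T^nx)_{n\in\mathbb{N}}$ converges to $u$. *)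

(* Defs.v *)
From Stdlib Require Import Reals.
From Coquelicot Require Import Coquelicot.
Open Scope R_scope.

Definition is_metric {X : Type} (d : X -> X -> R) : Prop :=
  (forall x y, 0 <= d x y) /\
  (forall x y, d x y = 0 <-> x = y) /\
  (forall x y, d x y = d y x) /\
  (forall x y z, d x z <= d x y + d y z).

Definition cauchy_seq {X : Type} (d : X -> X -> R) (u : nat -> X) : Prop :=
  forall eps, 0 < eps -> exists N, forall m n, (N <= m)%nat -> (N <= n)%nat ->
    d (u m) (u n) < eps.

Definition seq_converges_to {X : Type} (d : X -> X -> R) (u : nat -> X) (l : X) : Prop :=
  forall eps, 0 < eps -> exists N, forall n, (N <= n)%nat -> d (u n) l < eps.

Definition complete_metric {X : Type} (d : X -> X -> R) : Prop :=
  forall u, cauchy_seq d u -> exists l, seq_converges_to d u l.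

Definition contractive {X : Type} (d : X -> X -> R) (T : X -> X) : Prop :=
  forall x y, x <> y -> d (T x) (T y) < d x y.

Definition CJMP_contraction {X : Type} (d : X -> X -> R) (T : X -> X) : Prop :=
  contractive d T /\
  forall eps, 0 < eps -> exists delta, 0 < delta /\
    forall x y, eps < d x y -> d x y < eps + delta -> d (T x) (T y) <= eps.

Definition Picard_operator {X : Type} (d : X -> X -> R) (T : X -> X) : Prop :=
  exists u, T u = u /\ (forall v, T v = v -> v = u) /\
    forall x, seq_converges_to d (fun n => Nat.iter n T x) u.

(* Main.v *)
Require Import Defs.
From Stdlib Require Import Reals Lra Lia Classical ClassicalEpsilon.
From Coquelicot Require Import Coquelicot.
Open Scope R_scope.

Lemma my_choice {A B : Type} (P : A -> B -> Prop) :
  (forall a, exists b, P a b) -> exists f : A -> B, forall a, P a (f a).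
Proof.
  intros H. exists (fun a => proj1_sig (constructive_indefinite_description _ (H a))).
  intros a. apply (proj2_sig (constructive_indefinite_description _ (H a))).
Qed.

Lemma inf_ex (P : R -> Prop) (m : R) :
  (forall y, P y -> m <= y) -> (exists y, P y) ->
  exists L, (forall y, P y -> L <= y) /\
    (forall r, 0 < r -> exists y, P y /\ y < L + r).
Proof.
  intros Hm [y0 Hy0].
  destruct (completeness (fun z => P (- z))) as [l [Hub Hlub]].
  - exists (- m). intros z Hz. specialize (Hm _ Hz). lra.
  - exists (- y0). now rewrite Ropp_involutive.
  - exists (- l). split.
    + intros y Hy. assert (- y <= l) by (apply Hub; now rewrite Ropp_involutive). lra.
    + intros r Hr. apply NNPP. intros Hn.
      assert (Hb : l <= l - r).
      { apply Hlub. intros z Hz. apply Rnot_lt_le. intros Hlt.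
        apply Hn. exists (- z). split; [exact Hz| lra]. }
      lra.
Qed.

Section S.
Context {X : Type} (d : X -> X -> R) (T : X -> X) (Hm : is_metric d)
  (Hc : contractive d T).

Lemma nonexp x y : d (T x) (T y) <= d x y.
Proof.
  destruct Hm as (Hpos & Hzero & Hsym & Htri).
  destruct (classic (x = y)) as [->|Hne].
  - right. assert (d (T y) (T y) = 0) by (apply Hzero; auto).
    assert (d y y = 0) by (apply Hzero; auto). lra.
  - left. now apply Hc.
Qed.

Definition orb x n := Nat.iter n T x.
Definition a x n := d (orb x n) (orb x (S n)).

Lemma a_dec x n : a x (S n) <= a x n.
Proof. unfold a, orb. simpl. apply nonexp. Qed.

Lemma a_sdec x n : 0 < a x n -> a x (S n) < a x n.
Proof.
  destruct Hm as (Hpos & Hzero & Hsym & Htri).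
  intros H. unfold a, orb in *. simpl in *. apply Hc.
  intros He. apply Hzero in He. lra.
Qed.

Lemma a_mono x N n : (N <= n)%nat -> a x n <= a x N.
Proof.
  induction 1. - apply Rle_refl. - eapply Rle_trans; [apply a_dec|exact IHle].
Qed.

Hypothesis HJ : forall eps, 0 < eps -> exists delta, 0 < delta /\
    forall x y, eps < d x y -> d x y < eps + delta -> d (T x) (T y) <= eps.

Lemma a_small x r : 0 < r -> exists N, forall n, (N <= n)%nat -> a x n < r.
Proof.
  destruct Hm as (Hpos & Hzero & Hsym & Htri).
  intros Hr.
  destruct (inf_ex (fun y => exists n, y = a x n) 0) as [L [HL1 HL2]].
  { intros y [n ->]. apply Hpos. }
  { exists (a x 0). eauto. }
  assert (HL0 : 0 <= L).
  { apply Rnot_lt_le. intros Hl. destruct (HL2 (- L)) as [y [[n ->] Hy]]. lra.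
    pose proof (Hpos (orb x n) (orb x (S n))). unfold a in Hy. lra. }
  destruct (Req_dec L 0) as [HL|HL].
  - destruct (HL2 r Hr) as [y [[N ->] HN]]. exists N. intros n Hn.
    pose proof (a_mono x N n Hn). lra.
  - exfalso. assert (Lp : 0 < L) by lra.
    destruct (HJ L Lp) as [delta [Hd HD]].
    destruct (HL2 delta Hd) as [y [[N ->] HN]].
    assert (HaN : L <= a x N) by eauto.
    assert (H1 : L <= a x (S N)) by eauto.
    assert (H2 : L <= a x (S (S N))) by eauto.
    destruct (Req_dec (a x N) L) as [He|He].
    + pose proof (a_sdec x N). lra.
    + assert (a x (S N) <= L).
      { unfold a, orb. simpl. apply HD; unfold a, orb in *; simpl in *; lra. }
      pose proof (a_sdec x (S N)). lra.
Qed.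

Lemma orbit_cauchy x : cauchy_seq d (orb x).
Proof.
  destruct Hm as (Hpos & Hzero & Hsym & Htri).
  intros eps Heps.
  set (e := eps / 3).
  assert (He : 0 < e) by (unfold e; lra).
  destruct (HJ e He) as [delta0 [Hd0 HD0]].
  set (delta := Rmin delta0 e).
  assert (Hd : 0 < delta) by (unfold delta; apply Rmin_pos; lra).
  assert (Hdle : delta <= e) by apply Rmin_r.
  assert (HD : forall y z, d y z < e + delta -> d (T y) (T z) <= e).
  { intros y z Hyz. destruct (Rle_or_lt (d y z) e).
    - pose proof (nonexp y z). lra.
    - apply HD0; auto. pose proof (Rmin_l delta0 e). fold delta in H0. lra. }
  destruct (a_small x (delta / 2)) as [N HN]. lra.
  assert (Hk : forall k, d (orb x N) (orb x (N + k)) < e + delta / 2).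
  { induction k.
    - rewrite Nat.add_0_r. assert (d (orb x N) (orb x N) = 0) by (apply Hzero; auto). lra.
    - pose proof (Htri (orb x N) (orb x (S N)) (orb x (N + S k))).
      assert (d (orb x (S N)) (orb x (N + S k)) <= e).
      { replace (N + S k)%nat with (S (N + k)) by lia. unfold orb; simpl. apply HD.
        fold (orb x N) (orb x (N + k)). lra. }
      pose proof (HN N (le_n N)). unfold a in *. lra. }
  exists N. intros m n Hm' Hn'.
  replace m with (N + (m - N))%nat by lia.
  replace n with (N + (n - N))%nat by lia.
  pose proof (Hk (m - N)%nat). pose proof (Hk (n - N)%nat).
  pose proof (Htri (orb x (N + (m - N))) (orb x N) (orb x (N + (n - N)))).
  rewrite (Hsym (orb x (N + (m - N))) (orb x N)) in H1. unfold e in *. lra.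
Qed.

Lemma lim_unique u l1 l2 : seq_converges_to d u l1 -> seq_converges_to d u l2 -> l1 = l2.
Proof.
  destruct Hm as (Hpos & Hzero & Hsym & Htri).
  intros H1 H2. apply Hzero.
  destruct (Rle_lt_or_eq_dec 0 (d l1 l2) (Hpos _ _)) as [Hp|Hp]; [|auto].
  exfalso. set (r := d l1 l2 / 2).
  destruct (H1 r) as [N1 HN1]. unfold r; lra.
  destruct (H2 r) as [N2 HN2]. unfold r; lra.
  specialize (HN1 (N1 + N2)%nat ltac:(lia)). specialize (HN2 (N1 + N2)%nat ltac:(lia)).
  pose proof (Htri l1 (u (N1 + N2)%nat) l2). rewrite (Hsym l1 (u (N1 + N2)%nat)) in H. unfold r in *. lra.
Qed.

Lemma orbit_fix x l : seq_converges_to d (orb x) l -> T l = l.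
Proof.
  intros H. apply (lim_unique (fun n => orb x (S n))).
  - intros eps Heps. destruct (H eps Heps) as [N HN]. exists N. intros n Hn.
    unfold orb; simpl. pose proof (nonexp (Nat.iter n T x) l). specialize (HN n Hn).
    unfold orb in HN. lra.
  - intros eps Heps. destruct (H eps Heps) as [N HN]. exists N. intros n Hn. apply HN. lia.
Qed.

Lemma fix_unique u v : T u = u -> T v = v -> u = v.
Proof.
  intros Hu Hv. apply NNPP. intros Hne. pose proof (Hc u v Hne). rewrite Hu, Hv in H. lra.
Qed.

End S.

Theorem mainTheorem11 (X : Type) (x0 : X) (d : X -> X -> R) (T : X -> X)
  (F E : R -> R)
  (Hmetric : is_metric d) (Hcomplete : complete_metric d)
  (HT : forall x y, T x <> T y -> F (d (T x) (T y)) <= E (d x y))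
  (p1 : forall s t, 0 < s -> s <= t -> F s <= F t)
  (p2 : forall t, 0 < t -> E t < F t)
  (p3 : forall eps, 0 < eps -> forall Fplus : R,
          filterlim F (at_right eps) (locally Fplus) ->
          forall t : nat -> R, (forall n, eps < t n) -> is_lim_seq t eps ->
          Rbar_lt (LimInf_seq (fun n => E (t n))) Fplus) :
  CJMP_contraction d T /\ Picard_operator d T.
Proof.
  pose proof Hmetric as (Hpos & Hzero & Hsym & Htri).
  assert (Hc : contractive d T).
  { intros x y Hne.
    assert (Hxy : 0 < d x y).
    { destruct (Rle_lt_or_eq_dec 0 (d x y) (Hpos _ _)) as [h|h]; auto.
      exfalso. apply Hne. apply Hzero. auto. }
    destruct (classic (T x = T y)) as [He|He].
    - rewrite He. assert (d (T y) (T y) = 0) by (apply Hzero; auto). lra.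
    - assert (Hp : 0 < d (T x) (T y)).
      { destruct (Rle_lt_or_eq_dec 0 _ (Hpos (T x) (T y))) as [h|h]; auto.
        exfalso. apply He. apply Hzero. auto. }
      apply Rnot_le_lt. intros Hle.
      pose proof (HT x y He). pose proof (p2 _ Hxy). pose proof (p1 _ _ Hxy Hle). lra. }
  assert (HJ : forall eps, 0 < eps -> exists delta, 0 < delta /\
    forall x y, eps < d x y -> d x y < eps + delta -> d (T x) (T y) <= eps).
  { intros eps Heps. apply NNPP. intros Hn.
    assert (Hseq : forall n : nat, exists p : X * X,
      (eps < d (fst p) (snd p) /\ d (fst p) (snd p) < eps + / INR (S n)) /\
      eps < d (T (fst p)) (T (snd p))).
    { intros n. apply NNPP. intros Hn2. apply Hn. exists (/ INR (S n)). split.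
      - apply Rinv_0_lt_compat. apply lt_0_INR. lia.
      - intros x y H1 H2. apply Rnot_lt_le. intros H3. apply Hn2. exists (x, y). simpl. auto. }
    apply my_choice in Hseq. destruct Hseq as [f Hf].
    set (t := fun n => d (fst (f n)) (snd (f n))).
    destruct (inf_ex (fun y => exists s, eps < s /\ y = F s) (F eps)) as [L [HL1 HL2]].
    { intros y [s [Hs ->]]. apply p1; lra. }
    { exists (F (eps + 1)). exists (eps + 1). split; auto; lra. }
    assert (Hlim : filterlim F (at_right eps) (locally L)).
    { intros P [r HP]. destruct (HL2 r (cond_pos r)) as [y [[s0 [Hs0 ->]] Hy]].
      unfold filtermap, at_right, within, locally.
      assert (Hsp : 0 < s0 - eps) by lra.
      exists (mkposreal _ Hsp). intros y Hb Hy'. apply HP.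
      change (Rabs (y - eps) < s0 - eps) in Hb.
      change (Rabs (F y - L) < r).
      assert (L <= F y) by (apply HL1; eauto).
      assert (F y <= F s0).
      { apply p1. lra. apply Rabs_lt_between in Hb. lra. }
      apply Rabs_lt_between. lra. }
    assert (Ht1 : forall n, eps < t n) by (intros n; apply Hf).
    assert (Ht2 : is_lim_seq t eps).
    { apply is_lim_seq_le_le with (u := fun _ => eps) (w := fun n => eps + / INR (S n)).
      - intros n. destruct (Hf n) as [[Ha Hb] _]. unfold t. lra.
      - apply is_lim_seq_const.
      - apply (is_lim_seq_incr_1 (fun n => eps + / INR n)).
        replace (Finite eps) with (Finite (eps + 0)) by (f_equal; ring).
        apply is_lim_seq_plus'. apply is_lim_seq_const.
        apply (is_lim_seq_inv INR p_infty). apply is_lim_seq_INR. discriminate. }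
    pose proof (p3 eps Heps L Hlim t Ht1 Ht2) as Hlt.
    apply (Rbar_lt_not_le _ _ Hlt).
    rewrite <- (LimInf_seq_const L). apply LimInf_le. exists O. intros n _.
    destruct (Hf n) as [_ H3].
    assert (HTne : T (fst (f n)) <> T (snd (f n))).
    { intros He. rewrite He in H3. assert (d (T (snd (f n))) (T (snd (f n))) = 0)
        by (apply Hzero; auto). lra. }
    pose proof (HT _ _ HTne).
    assert (L <= F (d (T (fst (f n))) (T (snd (f n))))) by (apply HL1; exists (d (T (fst (f n))) (T (snd (f n)))); split; [lra|auto]).
    unfold t. lra. }
  split. { split; auto. }
  destruct (Hcomplete _ (orbit_cauchy d T Hmetric Hc HJ x0)) as [u Hu].
  assert (Hfix : T u = u) by exact (orbit_fix d T Hmetric Hc x0 u Hu).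
  exists u. split; [auto|split].
  - intros v Hv. exact (fix_unique d T Hc v u Hv Hfix).
  - intros x. destruct (Hcomplete _ (orbit_cauchy d T Hmetric Hc HJ x)) as [l Hl].
    pose proof (orbit_fix d T Hmetric Hc x l Hl).
    rewrite (fix_unique d T Hc u l Hfix H). exact Hl.
Qed.
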